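(* Let $\mathbb{F}$ be a field of characteristic zero, $d\ge 2$, $n\ge 0$ an integer, and let $a_{k,j}\in\mathbb{F}$ ($2\le k\le n$, $2\le j\le d$) be arbitrary. Let $L_0,\dots,L_n\in\mathbb{F}[x_1,\dots,x_d]$ be defined recursively by $L_0=1$, $L_1=x_1$ and, for $2\le k\le n$, $$L_k=\Psi_1(M_1)+\Psi_2\big((M_2)_{i_1=0}\big)+\dots+\Psi_d\big((M_d)_{i_1=\dots=i_{d-1}=0}\big)+a_{k,2}x_2+\dots+a_{k,d}x_d,$$ where $M_1=L_{k-1}$ and $M_j=\sum_{t=2}^{k-1}a_{t,j}L_{k-t}$ for $2\le j\le d$. Define $$q^*_{n,m}=\sum \frac{a_{2,2}^{\gamma_{2,2}}\cdots a_{n,2}^{\gamma_{2,n}}\cdots a_{2,d}^{\gamma_{d,2}}\cdots a_{n,d}^{\gamma_{d,n}}}{\gamma_{1,1}!\,\gamma_{2,2}!\cdots\gamma_{2,n}!\cdots\gamma_{d,2}!\cdots\gamma_{d,n}!}\,x_1^{\gamma_{1,1}}\,x_2^{\gamma_{2,2}+\dots+\gamma_{2,n}}\cdots x_d^{\gamma_{d,2}+\dots+\gamma_{d,n}},$$ the sum running over all nonnegative integers $\gamma_{1,1}$ and $\gamma_{s,j}$ ($2\le s\le d$, $2\le j\le n$) with $$\gamma_{1,1}+2(\gamma_{2,2}+\dots+\gamma_{d,2})+\dots+n(\gamma_{2,n}+\dots+\gamma_{d,n})=m.$$ Then $q^*_{n,m}=L_m$ for all $m=0,1,\dots,n$.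
   Context: $\Psi_j$ is the $\mathbb{F}$-linear operator on $\mathbb{F}[x_1,\dots,x_d]$ given on monomials by $\Psi_j(x_1^{\alpha_1}\cdots x_d^{\alpha_d})=\frac{1}{\alpha_j+1}x_1^{\alpha_1}\cdots x_j^{\alpha_j+1}\cdots x_d^{\alpha_d}$. For a polynomial $M$, $(M)_{i_1=\dots=i_{j-1}=0}$ denotes the polynomial consisting of those terms of $M$ that contain none of the variables $x_1,\dots,x_{j-1}$. The convention $0^0=1$ is used. ($q^*_{n,m}$ is the specialization of the polynomial $q_{n,m}=\sum_{\tau=m}\frac{\mathbf c_1^{\pmb\gamma_1}\cdots\mathbf c_d^{\pmb\gamma_d}}{\pmb\gamma_1!\cdots\pmb\gamma_d!}x_1^{|\pmb\gamma_1|}\cdots x_d^{|\pmb\gamma_d|}$, $\tau=\sum_j b_j\sum_i\gamma_{i,j}$, to $\mathbf b=(1,2,\dots,n)$, $\mathbf c_1=(1,0,\dots,0)$, $\mathbf c_s=(0,a_{2,s},\dots,a_{n,s})$.) *)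

(* Defs.v *)
From mathcomp Require Import all_boot all_order all_algebra.
From mathcomp Require Import mpoly.
Set Implicit Arguments. Unset Strict Implicit. Unset Printing Implicit Defensive.
Import GRing.Theory.
Local Open Scope ring_scope.

(* Variables x_1, ..., x_d are 'X_i for i : 'I_d, with x_(k+1) = 'X_i when val i = k. *)

Section Defs.
Variables (F : fieldType) (d : nat).

(* Psi_j (paper's index j = val j + 1): on monomials
   x^alpha |-> 1/(alpha_j+1) x^(alpha + e_j), extended linearly. *)
Definition Psi (j : 'I_d) (p : {mpoly F[d]}) : {mpoly F[d]} :=
  \sum_(m <- msupp p)
     ((p@_m) / ((m j).+1)%:R) *: 'X_[[multinom (m i + (i == j)) | i < d]].

(* (M)_{i_1 = ... = i_{j-1} = 0} for paper index j = val j + 1: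
   the terms of M containing none of the variables x_1, ..., x_{j-1}. *)
Definition trunc (j : 'I_d) (p : {mpoly F[d]}) : {mpoly F[d]} :=
  \sum_(m <- msupp p | [forall i : 'I_d, (val i < val j)%N ==> (m i == 0%N)])
     (p@_m) *: 'X_[m].

Definition x1 : {mpoly F[d]} :=
  'X_[[multinom (if val i == 0%N then 1%N else 0%N) | i < d]].

(* a k j stands for a_{k,j} (paper indices). *)
Variable a : nat -> nat -> F.

(* Given Ls = [:: L_0; ...; L_(k-1)] (k = size Ls >= 2), compute L_k. *)
Definition Lstep (Ls : seq {mpoly F[d]}) : {mpoly F[d]} :=
  let k := size Ls in
  let M (j : 'I_d) : {mpoly F[d]} :=
    if val j == 0%N then nth 0 Ls k.-1
    else \sum_(2 <= t < k) a t (val j).+1 *: nth 0 Ls (k - t) in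
  \sum_(j < d) Psi j (trunc j (M j))
  + \sum_(j < d | (1 <= val j)%N) a k (val j).+1 *: 'X_j.

Fixpoint Lseq (k : nat) : seq {mpoly F[d]} :=
  match k with
  | 0 => [:: 1]
  | 1 => [:: 1; x1]
  | k'.+1 => rcons (Lseq k') (Lstep (Lseq k'))
  end.

Definition L (k : nat) : {mpoly F[d]} := nth 0 (Lseq k) k.

(* Index set of the gamma's: gamma (s, j) for s : 'I_d (paper s = val s + 1)
   and j : 'I_n.+2 (paper j = val j; the range 0..n+1 always
   contains 1). *)
Definition allowed (n : nat) (sj : 'I_d * 'I_n.+2) : bool :=
  ((val sj.1 == 0%N) && (val sj.2 == 1%N)) ||
  [&& (1 <= val sj.1)%N, (2 <= val sj.2)%N & (val sj.2 <= n)%N].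

(* q*_{n,m}: sum over all gamma supported on allowed indices with weighted
   sum m; each gamma entry is at most m (weights are >= 1), so gamma ranges
   over finite functions with values in 'I_m.+1. *)
Definition qstar (n m : nat) : {mpoly F[d]} :=
  \sum_(g : {ffun 'I_d * 'I_n.+2 -> 'I_m.+1} |
          [forall sj, ~~ allowed sj ==> (val (g sj) == 0%N)] &&
          (\sum_(sj | allowed sj) val sj.2 * val (g sj) == m)%N)
    ((\prod_(sj | allowed sj && (1 <= val sj.1)%N) a (val sj.2) (val sj.1).+1 ^+ g sj)
      / (\prod_(sj | allowed sj) ((val (g sj))`!)%:R)
     *: 'X_[[multinom (if val s == 0%N then val (g (s, inord 1))
                      else \sum_(j : 'I_n.+2 | (2 <= val j <= n)%N) val (g (s, j)))%N
             | s < d]]).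

End Defs.

(* Main.v *)
Require Import Defs.
From mathcomp Require Import all_boot all_order all_algebra.
From mathcomp Require Import mpoly.
From mathcomp Require Import zify.
Set Implicit Arguments. Unset Strict Implicit. Unset Printing Implicit Defensive.
Import GRing.Theory.
Local Open Scope ring_scope.

Section S.
Variables (F : fieldType) (d : nat).

Lemma sum_msupp_pick (p : {mpoly F[d]}) (f : 'X_{1..d} -> F) b :
  \sum_(m <- msupp p) f m * (m == b)%:R = if b \in msupp p then f b else 0.
Proof.
rewrite (eq_bigr (fun m => if m == b then f m else 0)); last first.
  by move=> m _; case: eqP => _; rewrite ?mulr1 ?mulr0.
rewrite -big_mkcond /=.
case: ifP => hb.
  rewrite -big_filter.
  have -> : [seq i <- msupp p | i == b] = [:: b].
    have := msupp_uniq p; elim: (msupp p) hb => //= x s IH.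
    rewrite in_cons => /orP [/eqP <-|hs] /andP [hx hu].
      rewrite eqxx; congr (_ :: _); apply/eqP; rewrite -[_ == _]negbK -has_filter.
      by apply/hasP => [[y hy /eqP hyx]]; move: hx; rewrite -hyx hy.
    case: eqP => [hxb|_]; last exact: IH.
    by move: hx; rewrite hxb hs.
  by rewrite big_seq1.
rewrite big_seq_cond big1 // => m /andP [hm /eqP hmb].
by move: hm; rewrite hmb hb.
Qed.

Lemma addU_mnm (m : 'X_{1..d}) (j : 'I_d) :
  [multinom (m i + (i == j))%N | i < d] = (m + U_(j))%MM.
Proof. by apply/mnmP => i; rewrite mnmE mnmDE mnm1E eq_sym. Qed.

Lemma coef_Psi (j : 'I_d) (p : {mpoly F[d]}) al :
  (Psi j p)@_al = if (0 < al j)%N then p@_(al - U_(j))%MM / (al j)%:R else 0.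
Proof.
rewrite /Psi raddf_sum /=.
under eq_bigr do rewrite mcoeffZ mcoeffX addU_mnm.
case: ifP => hj.
  have hal : al = (al - U_(j) + U_(j))%MM by rewrite submK // lep1mP -lt0n.
  have -> : (al j)%:R = ((al - U_(j))%MM j).+1%:R :> F.
    by rewrite mnmBE mnm1E eqxx subn1 prednK.
  rewrite (eq_bigr (fun m => (p@_m / (m j).+1%:R) * (m == (al - U_(j))%MM)%:R)); last first.
    move=> m _; congr (_ * _%:R); rewrite {1}hal.
    by rewrite (can_eq (addmK _)).
  rewrite sum_msupp_pick; case: ifP => // /negbT.
  by rewrite -mcoeff_eq0 => /eqP ->; rewrite mul0r.
rewrite big1 // => m _; case: eqP; rewrite ?mulr0 // => hm.
by move: hj; rewrite -hm mnmDE mnm1E eqxx addn1.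
Qed.

Lemma coef_trunc (j : 'I_d) (p : {mpoly F[d]}) al :
  (trunc j p)@_al = if [forall i : 'I_d, (val i < val j)%N ==> (al i == 0%N)] then p@_al else 0.
Proof.
rewrite /trunc raddf_sum /= big_mkcond /=.
set c := fun m : 'X_{1..d} => [forall i : 'I_d, (val i < val j)%N ==> (m i == 0%N)].
rewrite (eq_bigr (fun m => (if c m then p@_m else 0) * (m == al)%:R)); last first.
  by move=> m _; rewrite /c; case: ifP => _; rewrite ?mcoeffZ ?mcoeffX ?mul0r // eq_sym.
rewrite sum_msupp_pick; case: ifP => // /negbT.
by rewrite -mcoeff_eq0 => /eqP ->; rewrite if_same.
Qed.

End S.

Section Q.
Variables (F : fieldType) (d : nat) (a : nat -> nat -> F) (n : nat).
Local Notation I := ('I_d * 'I_n.+2)%type.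
Implicit Types (f : I -> nat).

Definition okf f := [forall sj : I, ~~ allowed sj ==> (f sj == 0%N)].
Definition wt f := (\sum_(sj : I | allowed sj) val sj.2 * f sj)%N.
Definition cf f : F :=
  (\prod_(sj : I | allowed sj && (1 <= val sj.1)%N) a (val sj.2) (val sj.1).+1 ^+ f sj)
      / (\prod_(sj : I | allowed sj) ((f sj)`!)%:R).
Definition mono f : 'X_{1..d} :=
  [multinom (if val s == 0%N then f (s, inord 1)
             else \sum_(j : 'I_n.+2 | (2 <= val j <= n)%N) f (s, j))%N | s < d].
Definition G N (g : {ffun I -> 'I_N.+1}) : I -> nat := fun sj => nat_of_ord (g sj).
Definition Q N m : {mpoly F[d]} :=
  \sum_(g : {ffun I -> 'I_N.+1} | okf (G g) && (wt (G g) == m))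
     cf (G g) *: 'X_[mono (G g)].

Lemma qstarE m : @qstar F d a n m = Q m m.
Proof. by []. Qed.

Lemma allowed_ge1 (x : I) : allowed x -> (1 <= val x.2)%N.
Proof. by rewrite /allowed => /orP [/andP [_ /eqP ->]| /and3P [_ h _]] //; apply: leq_trans h. Qed.

Lemma le_wt f (x : I) : allowed x -> (f x * val x.2 <= wt f)%N.
Proof. by move=> hx; rewrite /wt (bigD1 x) //= mulnC leq_addr. Qed.

Lemma le_wt1 f (x : I) : allowed x -> (f x <= wt f)%N.
Proof.
move=> hx; apply: leq_trans (le_wt f hx); rewrite -{1}[f x]muln1 leq_mul2l.
by rewrite allowed_ge1 ?orbT.
Qed.

Lemma okf_ext f1 f2 : f1 =1 f2 -> okf f1 = okf f2.
Proof. by move=> h; apply: eq_forallb => x; rewrite h. Qed.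
Lemma wt_ext f1 f2 : f1 =1 f2 -> wt f1 = wt f2.
Proof. by move=> h; apply: eq_bigr => x _; rewrite h. Qed.
Lemma cf_ext f1 f2 : f1 =1 f2 -> cf f1 = cf f2.
Proof.
by move=> h; rewrite /cf; congr (_ / _); apply: eq_bigr => x _; rewrite h.
Qed.
Lemma mono_ext f1 f2 : f1 =1 f2 -> mono f1 = mono f2.
Proof.
move=> h; apply/mnmP => s; rewrite !mnmE h; case: ifP => // _.
by apply: eq_bigr => x _; rewrite h.
Qed.

Lemma coefQ N m al : (Q N m)@_al =
  \sum_(g : {ffun I -> 'I_N.+1} | okf (G g) && (wt (G g) == m) && (mono (G g) == al)) cf (G g).
Proof.
rewrite /Q raddf_sum /= [RHS]big_mkcondr /=; apply: eq_bigr => g _.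
by rewrite mcoeffZ mcoeffX; case: eqP; rewrite ?mulr1 ?mulr0.
Qed.


Section Incr.
Variable e : I.
Hypothesis he : allowed e.
Variable f : I -> nat.
Let df := fun x => (f x + (x == e))%N.

Lemma okf_incr : okf df = okf f.
Proof.
apply: eq_forallb => x; rewrite /df; case: (x =P e) => [->|_]; last by rewrite addn0.
by rewrite he.
Qed.

Lemma wt_incr : wt df = (wt f + val e.2)%N.
Proof.
rewrite /wt /df; under eq_bigr do rewrite mulnDr; rewrite big_split /=; congr (_ + _)%N.
rewrite (bigD1 e) //= eqxx muln1 big1 ?addn0 // => x /andP [_ /negbTE ->].
by rewrite muln0.
Qed.

Lemma mono_incr : mono df = (mono f + U_(e.1))%MM.
Proof.
apply/mnmP => s; rewrite mnmDE !mnmE ?mnm1E /df.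
move: he; case: e => [s' j'] /=; rewrite /allowed /= => hal.
case: ifP => hs.
  congr (_ + nat_of_bool _)%N; rewrite xpair_eqE eq_sym.
  case: (s' =P s) => [hss|] //=; subst s'.
  move: hal; rewrite (eqP hs) /= => /orP [/eqP h1|//].
  by apply/eqP/val_inj; rewrite /= inordK.
rewrite big_split /=; congr (_ + _)%N.
case: (s' =P s) => [hss|hne] /=.
  subst s'; move: hal; rewrite hs /= => /andP [_ hj].
  rewrite (bigD1 j') //= !eqxx big1 // => j /andP [_ hjj].
  by rewrite xpair_eqE eqxx (negbTE hjj).
by rewrite big1 // => j _; rewrite xpair_eqE; case: eqP => // hh; case: hne.
Qed.

Hypothesis hchar : [pchar F] =i pred0.

Lemma cf_incr : (f e).+1%:R * cf df =
  (if (1 <= val e.1)%N then a (val e.2) (val e.1).+1 else 1) * cf f.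
Proof.
rewrite /cf /df.
have -> : \prod_(sj : I | allowed sj && (1 <= val sj.1)%N)
            a (val sj.2) (val sj.1).+1 ^+ (f sj + (sj == e))%N =
         (\prod_(sj : I | allowed sj && (1 <= val sj.1)%N)
            a (val sj.2) (val sj.1).+1 ^+ f sj) *
         (if (1 <= val e.1)%N then a (val e.2) (val e.1).+1 else 1).
  under eq_bigr do rewrite exprD; rewrite big_split /=; congr (_ * _).
  case: ifP => h1.
    rewrite (bigD1 e) ?he ?h1 //= eqxx expr1 big1 ?mulr1 // => x /andP [_ /negbTE ->].
    by rewrite expr0.
  rewrite big1 // => x /andP [hx1 hx2]; case: eqP => hx; last by rewrite expr0.
  by move: hx2; rewrite hx h1.
have -> : \prod_(sj : I | allowed sj) ((f sj + (sj == e))%N`!)%:R =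
          (f e).+1%:R * \prod_(sj : I | allowed sj) ((f sj)`!)%:R :> F.
  rewrite (bigD1 e) // [in RHS](bigD1 e) //= eqxx addn1 factS natrM -mulrA.
  congr (_ * (_ * _)); apply: eq_bigr => x /andP [_ /negbTE ->].
  by rewrite addn0.
have hnz : (f e).+1%:R != 0 :> F.
  by move/pcharf0P: hchar => ->.
set k := (f e).+1%:R; set P := \prod_(_ | _) _; set D := \prod_(_ | _) _; set c := if _ then _ else _.
rewrite invfM mulrCA (mulrA k) mulfV // mul1r.
by rewrite [RHS]mulrCA [RHS]mulrA.
Qed.

End Incr.


Section PerE.
Hypothesis hchar : [pchar F] =i pred0.
Variable e : I.
Hypothesis he : allowed e.
Local Notation GG := (@G n).
Definition incr (g : {ffun I -> 'I_n.+1}) : {ffun I -> 'I_n.+1} :=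
  [ffun x => if x == e then inord (GG g x).+1 else g x].
Definition decr (g : {ffun I -> 'I_n.+1}) : {ffun I -> 'I_n.+1} :=
  [ffun x => if x == e then inord (GG g x).-1 else g x].

Lemma Gincr g : (GG g e < n)%N -> GG (incr g) =1 (fun x => GG g x + (x == e))%N.
Proof.
move=> lt x; rewrite /G ffunE; case: eqP => [->|_]; last by rewrite addn0.
by rewrite inordK ?addn1.
Qed.

Lemma decr_incr g : (GG g e < n)%N -> decr (incr g) = g.
Proof.
move=> lt; apply/ffunP => x; rewrite ffunE; case: eqP => [->|hx]; last first.
  by rewrite ffunE (introF eqP hx).
have := Gincr lt e; rewrite eqxx addn1 => ->.
exact: inord_val.
Qed.

Lemma decr_incr_lt g : (1 <= n)%N -> decr (incr g) == g -> (GG g e < n)%N.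
Proof.
move=> n1 /eqP /ffunP /(_ e); rewrite ffunE eqxx.
have := ltn_ord (g e); rewrite ltnS leq_eqVlt => /orP [/eqP hg|//].
have hg' : GG g e = n by exact: hg.
rewrite {1}/G ffunE eqxx hg' => /(congr1 val) /=.
have -> : (inord n.+1 : 'I_n.+1) = ord0.
  by rewrite /inord /insubd insubN ?ltnn.
rewrite /= inordK // => h0; move: n1; rewrite -hg -h0.
by [].
Qed.

Local Notation ce := (if (1 <= val e.1)%N then a (val e.2) (val e.1).+1 else 1).

Lemma perE k (al : 'X_{1..d}) : (k <= n)%N -> (0 < al e.1)%N ->
  \sum_(g : {ffun I -> 'I_n.+1} | okf (GG g) && (wt (GG g) == k) && (mono (GG g) == al))
      (GG g e)%:R * cf (GG g)
  = if (val e.2 <= k)%N then ce *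
      \sum_(g : {ffun I -> 'I_n.+1} | okf (GG g) && (wt (GG g) == k - val e.2)%N
                 && (mono (GG g) == (al - U_(e.1))%MM)) cf (GG g)
    else 0.
Proof.
move=> hkn hal.
rewrite (bigID (fun g => 0 < GG g e)%N) /= [X in _ + X]big1 ?addr0; last first.
  by move=> g /andP [_]; rewrite lt0n negbK => /eqP ->; rewrite mul0r.
have t1 := allowed_ge1 he.
case: (leqP (val e.2) k) => htk; last first.
  rewrite big1 // => g /andP [/andP [/andP [_ /eqP hw] _] hpos].
  have := le_wt (GG g) he; rewrite hw => h.
  have : (val e.2 <= k)%N.
    by apply: leq_trans h; rewrite -{1}[val e.2]mul1n leq_mul2r hpos orbT.
  by rewrite leqNgt htk.
have n1 : (1 <= n)%N by apply: leq_trans hkn; apply: leq_trans htk.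
rewrite (reindex_onto incr decr); last first.
  move=> g /andP [_ hpos]; apply/ffunP => x; rewrite ffunE; case: eqP => [->|hx]; last first.
    by rewrite ffunE (introF eqP hx).
  have h1 : ((GG g e).-1 < n.+1)%N by apply: leq_ltn_trans (leq_pred _) (ltn_ord (g e)).
  apply: val_inj; rewrite /= /G ffunE eqxx (inordK h1) prednK // inordK //; exact: ltn_ord.
rewrite big_distrr /=; apply: eq_big => g.
  apply/idP/idP.
    move=> /andP [/andP [/andP [/andP [hok hw] hm] _] hd].
    have lt := decr_incr_lt n1 hd.
    move: hok hw hm; rewrite (okf_ext (Gincr lt)) (wt_ext (Gincr lt)) (mono_ext (Gincr lt)).
    rewrite okf_incr // wt_incr // mono_incr // => -> /eqP hw /eqP hm.
    by rewrite -hw addnK -hm addmK !eqxx.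
  move=> /andP [/andP [hok /eqP hw] /eqP hm].
  have lt : (GG g e < n)%N.
    have := le_wt (GG g) he; rewrite hw => h.
    have : ((GG g e).+1 * val e.2 <= n)%N.
      move: h htk hkn; rewrite mulSn /=; lia.
    move: t1; rewrite /=; nia.
  rewrite (okf_ext (Gincr lt)) (wt_ext (Gincr lt)) (mono_ext (Gincr lt)).
  rewrite okf_incr // wt_incr // mono_incr // hok hw hm subnK // submK ?lep1mP -?lt0n //.
  by rewrite !eqxx (Gincr lt) eqxx addn1 decr_incr ?eqxx.
move=> /andP [_ hd]; have lt := decr_incr_lt n1 hd.
rewrite (cf_ext (Gincr lt)) (Gincr lt) eqxx addn1.
exact: cf_incr.
Qed.

End PerE.

Section Rec.
Hypothesis hchar : [pchar F] =i pred0.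

Lemma recA (j : 'I_d) k (al : 'X_{1..d}) : val j = 0%N -> (1 <= k <= n)%N -> (0 < al j)%N ->
  (al j)%:R * (Q n k)@_al = (Q n (k - 1)%N)@_(al - U_(j))%MM.
Proof.
move=> j0 /andP [k1 kn] hal.
set e : I := (j, inord 1).
have he : allowed e by rewrite /allowed /= j0 inordK.
have e2 : val e.2 = 1%N by rewrite /= inordK.
rewrite !coefQ mulr_sumr.
rewrite (eq_bigr (fun g => (@G n g e)%:R * cf (G g))); last first.
  move=> g /andP [_ /eqP <-]; congr (_%:R * _); rewrite mnmE j0.
  by [].
rewrite (perE hchar he) // e2 k1 /= j0 mul1r.
by [].
Qed.

Lemma recB (j : 'I_d) k (al : 'X_{1..d}) : (1 <= val j)%N -> (k <= n)%N -> (0 < al j)%N ->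
  (al j)%:R * (Q n k)@_al =
  \sum_(t : 'I_n.+2 | (2 <= val t <= n)%N)
     (if (val t <= k)%N then a t (val j).+1 * (Q n (k - t)%N)@_(al - U_(j))%MM else 0).
Proof.
move=> j1 kn hal.
rewrite !coefQ mulr_sumr.
rewrite (eq_bigr (fun g => \sum_(t : 'I_n.+2 | (2 <= val t <= n)%N)
                              (@G n g (j, t))%:R * cf (G g))); last first.
  move=> g /andP [_ /eqP <-]; rewrite mnmE.
  have -> : (val j == 0%N) = false by case: (val j) j1.
  by rewrite natr_sum mulr_suml.
rewrite exchange_big /=; apply: eq_bigr => t ht.
have he : allowed (j, t) by rewrite /allowed /= j1 ht orbT.
by rewrite (perE hchar he) //= j1 coefQ.
Qed.

End Rec.

Lemma Q0 : Q n 0 = 1.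
Proof.
rewrite /Q (big_pred1 [ffun=> ord0]).
  have -> : mono (G [ffun=> (ord0 : 'I_n.+1)]) = 0%MM.
    apply/mnmP => s; rewrite mnmE mnm0E /G; case: ifP => _; first by rewrite ffunE.
    by rewrite big1 // => x _; rewrite ffunE.
  rewrite /cf !big1 ?divr1 ?scale1r ?mpolyX0 //.
    by move=> x _; rewrite /G ffunE.
  by move=> x _; rewrite /G ffunE.
move=> g /=; apply/idP/eqP => [/andP [hok /eqP hw]|->].
  apply/ffunP => x; rewrite ffunE; apply: val_inj => /=.
  case hx: (allowed x); last by move/forallP: hok => /(_ x); rewrite hx => /eqP.
  by have := le_wt1 (G g) hx; rewrite hw leqn0 => /eqP.
apply/andP; split.
  by apply/forallP => x; rewrite /G ffunE implybT.
by rewrite /wt big1 // => x _; rewrite /G ffunE muln0.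
Qed.

Lemma Q_widen m : (m <= n)%N -> Q m m = Q n m.
Proof.
move=> hmn; have hmn' : (m.+1 <= n.+1)%N by [].
pose h := fun g : {ffun I -> 'I_m.+1} => [ffun x => widen_ord hmn' (g x)] : {ffun I -> 'I_n.+1}.
pose h' := fun g : {ffun I -> 'I_n.+1} => [ffun x => (inord (g x) : 'I_m.+1)].
have hG : forall g, G (h g) =1 G g by move=> g x; rewrite /G ffunE.
rewrite /Q (reindex_onto h h') /=; last first.
  move=> g /andP [hok /eqP hw]; apply/ffunP => x; rewrite !ffunE; apply: val_inj => /=.
  apply: inordK; rewrite ltnS.
  case hx: (allowed x); last by move/forallP: hok => /(_ x); rewrite hx /G => /eqP ->.
  by rewrite -hw le_wt1.
symmetry; apply: eq_big => g.
  rewrite (okf_ext (hG g)) (wt_ext (hG g)).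
  have -> : h' (h g) == g.
    by apply/eqP/ffunP => x; rewrite !ffunE; apply: val_inj; rewrite /= inordK.
  by rewrite andbT.
by move=> _; rewrite (cf_ext (hG g)) (mono_ext (hG g)).
Qed.

Lemma le_mono f (x : I) : allowed x -> (f x <= mono f x.1)%N.
Proof.
case: x => s j; rewrite /allowed /= mnmE => /orP [/andP [hs /eqP hj]|/and3P [h1 h2 h3]].
  rewrite hs; have -> : j = inord 1 by apply: val_inj; rewrite /= inordK.
  by [].
rewrite ifN -?lt0n //.
by rewrite (bigD1 j) ?h2 ?h3 //= leq_addr.
Qed.

Lemma coefQ_0 N k : (1 <= k)%N -> (Q N k)@_0%MM = 0.
Proof.
move=> k1; rewrite coefQ big1 // => g /andP [/andP [hok /eqP hw] /eqP hm].
suff : wt (G g) = 0%N by rewrite hw => h; move: k1; rewrite h.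
rewrite /wt big1 // => x hx; have := le_mono (G g) hx; rewrite hm mnm0E leqn0 => /eqP ->.
by rewrite muln0.
Qed.

End Q.

Lemma first_nz (d : nat) (al : 'X_{1..d}) : al != 0%MM ->
  exists j0 : 'I_d, (0 < al j0)%N /\ (forall i : 'I_d, (val i < val j0)%N -> al i = 0%N).
Proof.
move=> hnz.
have ex : exists m, [exists i : 'I_d, (val i == m) && (0 < al i)%N].
  case: (pickP (fun i : 'I_d => 0 < al i)%N) => [i hi|h0].
    by exists (val i); apply/existsP; exists i; rewrite eqxx hi.
  move: hnz; have -> : al = 0%MM; last by rewrite eqxx.
  by apply/mnmP => i; rewrite mnm0E; have := h0 i; rewrite lt0n => /negbFE /eqP.
case: (ex_minnP ex) => m /existsP [i /andP [/eqP him hi]] hmin.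
exists i; split => // i' hi'; apply/eqP; rewrite -leqn0 leqNgt; apply/negP => hpos.
have : (m <= val i')%N by apply: hmin; apply/existsP; exists i'; rewrite eqxx hpos.
by rewrite -him leqNgt hi'.
Qed.

Lemma sum_conv (F : fieldType) (k N : nat) (g : nat -> F) : (k <= N)%N ->
  \sum_(t < N.+2 | (2 <= t <= N)%N) (if (t <= k)%N then g t else 0) = \sum_(2 <= t < k.+1) g t.
Proof.
move=> hkN; rewrite -big_mkcondr /= big_geq_mkord (big_ord_widen_cond N.+2) //; last first.
  by rewrite ltnS leqW.
apply: eq_bigl => t /=; rewrite ltnS.
case: (leqP t k) => h; rewrite ?andbT ?andbF //.
by rewrite (leq_trans h hkN) andbT.
Qed.

Section Lseq.
Variables (F : fieldType) (d : nat) (a : nat -> nat -> F).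

Lemma Lseq_SS k : @Lseq F d a k.+2 = rcons (@Lseq F d a k.+1) (Lstep a (@Lseq F d a k.+1)).
Proof. by []. Qed.

Lemma size_Lseq k : size (@Lseq F d a k) = k.+1.
Proof. by elim: k => [|[|k] IH] //; rewrite Lseq_SS size_rcons IH. Qed.

Lemma nth_Lseq k i : (i <= k)%N -> nth 0 (@Lseq F d a k) i = @L F d a i.
Proof.
elim: k i => [|[|k] IH] i.
- by rewrite leqn0 => /eqP ->.
- by case: i => [|[|i]].
- rewrite leq_eqVlt => /orP [/eqP ->|hi]; first by [].
  by rewrite Lseq_SS nth_rcons size_Lseq hi; apply: IH.
Qed.

Lemma L_step k : @L F d a k.+2 = Lstep a (@Lseq F d a k.+1).
Proof. by rewrite /L Lseq_SS nth_rcons size_Lseq ltnn eqxx. Qed.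

End Lseq.


Section Main.
Variables (F : fieldType) (d : nat) (a : nat -> nat -> F) (n : nat).
Hypothesis hchar : [pchar F] =i pred0.
Local Notation QQ m := (@Q F d a n n m).

Lemma natr_nz (m : nat) : (0 < m)%N -> (m%:R : F) != 0.
Proof. by move/pcharf0P: hchar => ->; rewrite -lt0n. Qed.

Lemma step k : (k.+2 <= n)%N -> (forall i, (i < k.+2)%N -> QQ i = @L F d a i) ->
  QQ k.+2 = @L F d a k.+2.
Proof.
move=> hkn IH; rewrite L_step.
set Ls := @Lseq F d a k.+1.
have hLs : forall i, (i <= k.+1)%N -> nth 0 Ls i = QQ i.
  by move=> i hi; rewrite nth_Lseq // IH.
have hsz : size Ls = k.+2 by rewrite size_Lseq.
apply/mpolyP => al.
set q := (QQ k.+2)@_al.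
rewrite /Lstep hsz mcoeffD !raddf_sum /=.
under eq_bigr do rewrite coef_Psi coef_trunc.
under [X in _ + X]eq_bigr do rewrite mcoeffZ mcoeffX.
have hk := @coefQ_0 F d a n n k.+2 isT.
case: (eqVneq al 0%MM) => [hal0|hnz].
  rewrite /q hal0 hk big1 ?add0r; last by move=> j _; rewrite mnm0E.
  by rewrite big1 // => j _; rewrite mnm1_eq0 mulr0.
have [j0 [hj0 hmin]] := first_nz hnz.
rewrite [X in _ = X + _](bigD1 j0) //= [X in _ = _ + X + _]big1 ?addr0; last first.
  move=> j hj; case hpos: (0 < al j)%N => //.
  have ltj : (val j0 < val j)%N.
    rewrite ltn_neqAle; apply/andP; split; first by apply: contraNneq hj => /val_inj ->.
    by rewrite leqNgt; apply/negP => /hmin h; move: hpos; rewrite h.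
  rewrite ifF ?mul0r //; apply/negbTE/forallP => /(_ j0); rewrite ltj /= mnmBE mnm1E.
  by rewrite (negbTE hj) subn0 => /eqP h; move: hj0; rewrite h.
rewrite hj0 ifT; last first.
  apply/forallP => i; apply/implyP => hi; rewrite mnmBE hmin //.
have hx : (al j0)%:R != 0 :> F by apply: natr_nz.
have hU : forall j : 'I_d, (U_(j)%MM == al) -> j = j0.
  move=> j /eqP hj; move: hj0; rewrite -hj mnm1E.
  by case: eqP.
have hbeta : ((al - U_(j0))%MM == 0%MM) = (U_(j0)%MM == al).
  apply/eqP/eqP => [h|<-]; last by apply/mnmP => i; rewrite mnmBE mnm0E subnn.
  by rewrite -(@submK _ U_(j0) al) ?h ?add0m // lep1mP -lt0n.
case: (eqVneq (val j0) 0%N) => hz.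
  rewrite big1 ?addr0; last first.
    move=> j hj; case: eqP => h; last by rewrite mulr0.
    by move: hj; rewrite (hU j (introT eqP h)) hz.
  have := @recA F d a n hchar j0 k.+2 al hz hkn hj0.
  rewrite subn1 /= => h; rewrite hLs // -h /q.
  by rewrite mulrAC mulfV // mul1r.
have h1 : (1 <= val j0)%N by rewrite lt0n hz.
rewrite [X in _ = _ + X](bigD1 j0) //= [X in _ = _ + (_ + X)]big1 ?addr0; last first.
  move=> j /andP [_ hj]; case: eqP => h; last by rewrite mulr0.
  by move: hj; rewrite (hU j (introT eqP h)) eqxx.
rewrite raddf_sum /=; under eq_bigr do rewrite mcoeffZ.
set be := (al - U_(j0))%MM.
have hM : \sum_(2 <= t < k.+2) a t j0.+1 * Ls`_(k.+2 - t)%N@_be =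
          \sum_(2 <= t < k.+2) a t j0.+1 * (QQ (k.+2 - t)%N)@_be.
  rewrite !big_seq; apply: eq_bigr => t; rewrite mem_index_iota => /andP [ht1 ht2].
  by rewrite hLs //; lia.
rewrite hM.
have := @recB F d a n hchar j0 k.+2 al h1 hkn hj0.
rewrite (@sum_conv F k.+2 n (fun t => a t j0.+1 * (QQ (k.+2 - t)%N)@_be) hkn).
rewrite big_nat_recr //= subnn (@Q0 F d a n) mcoeff1 hbeta => h.
have -> : q = ((al j0)%:R * q) / (al j0)%:R by rewrite mulrAC mulfV // mul1r.
rewrite /q h mulrDl.
case hUa: (U_(j0)%MM == al); last by rewrite !mulr0 mul0r.
have -> : al j0 = 1%N by rewrite -(eqP hUa) mnm1E eqxx.
by rewrite !divr1.
Qed.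
End Main.

Lemma beta_eq (d : nat) (al : 'X_{1..d}) (j : 'I_d) : (0 < al j)%N ->
  ((al - U_(j))%MM == 0%MM) = (U_(j)%MM == al).
Proof.
move=> hj; apply/eqP/eqP => [h|<-]; last by apply/mnmP => i; rewrite mnmBE mnm0E subnn.
by rewrite -(@submK _ U_(j) al) ?h ?add0m // lep1mP -lt0n.
Qed.

Section Main2.
Variables (F : fieldType) (d : nat) (a : nat -> nat -> F) (n : nat).
Hypothesis hchar : [pchar F] =i pred0.
Local Notation QQ m := (@Q F d a n n m).

Lemma Q1 : (1 <= n)%N -> (1 <= d)%N -> QQ 1 = @x1 F d.
Proof.
move=> n1 d1; apply/mpolyP => al; rewrite /x1 mcoeffX.
set mm := [multinom _ | i < d].
case: (eqVneq al 0%MM) => [->|hnz].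
  rewrite coefQ_0 //; case: eqP => // /mnmP /(_ (Ordinal d1)).
  by rewrite mnmE mnm0E.
have [j0 [hj0 hmin]] := first_nz hnz.
have hx : (al j0)%:R != 0 :> F by apply: natr_nz.
have -> : (QQ 1)@_al = ((al j0)%:R * (QQ 1)@_al) / (al j0)%:R.
  by rewrite mulrAC mulfV // mul1r.
case: (eqVneq (val j0) 0%N) => hz.
  rewrite (@recA F d a n hchar j0 1 al hz) ?n1 // subnn (@Q0 F d a n) mcoeff1 beta_eq //.
  have -> : mm = U_(j0)%MM.
    apply/mnmP => i; rewrite mnmE mnm1E; case: (eqVneq j0 i) => [<-|hne]; first by rewrite hz.
    case: eqP => // hi; case/negP: hne; apply/eqP/val_inj; rewrite /= hi hz.
    by [].
  case hUa: (U_(j0)%MM == al); last by rewrite mul0r.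
  have -> : al j0 = 1%N by rewrite -(eqP hUa) mnm1E eqxx.
  by rewrite divr1.
have h1 : (1 <= val j0)%N by rewrite lt0n hz.
rewrite (@recB F d a n hchar j0 1 al h1) // big1 ?mul0r; last first.
  by move=> t /andP [ht _]; rewrite leqNgt (leq_trans _ ht).
case: eqP => // hm; move: hj0; rewrite -hm mnmE (negbTE hz).
by [].
Qed.

End Main2.

Theorem proposition4 (F : fieldType) (hchar : [pchar F] =i pred0)
  (d : nat) (hd : (2 <= d)%N) (n : nat) (a : nat -> nat -> F) :
  forall m : nat, (m <= n)%N -> @qstar F d a n m = @L F d a m.
Proof.
move=> m0 hm; rewrite qstarE Q_widen //.
have d1 : (1 <= d)%N by apply: ltnW.
suff H : forall k, (k <= n)%N -> forall i, (i <= k)%N -> @Q F d a n n i = @L F d a i.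
  by apply: (H m0 hm m0 (leqnn m0)).
elim=> [|k IHk] hk i hi.
  by move: hi; rewrite leqn0 => /eqP ->; rewrite (@Q0 F d a n).
move: hi; rewrite leq_eqVlt => /orP [/eqP ->|hi]; last exact: IHk (ltnW hk) i hi.
case: k IHk hk => [|k] IHk hk.
  by rewrite (@Q1 F d a n hchar hk d1).
apply: (step hchar hk) => i0 hi0; exact: IHk (ltnW hk) i0 hi0.
Qed.
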